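(* Let $P$ be the Petersen graph, i.e. the graph whose vertices are the $2$-element subsets of $\{1,2,3,4,5\}$, two vertices being adjacent if and only if the corresponding subsets are disjoint. Then the resolving topological index of $P$ is $\mathcal{R}(P)=\frac{5}{3}$.
   Context: All graphs are finite, simple and connected, with at least two vertices; $d(u,v)$ denotes the shortest-path distance. $V_p$ denotes the set of all unordered pairs $(u,v)$ of distinct vertices. A vertex $x$ resolves the pair $(u,v)$ if $d(x,u)\neq d(x,v)$. For $(u,v)\in V_p$, $R(u,v)$ is the set of all vertices resolving $(u,v)$ (it always contains $u$ and $v$). The resolving share of a vertex $w$ for $(u,v)$ is $r_w(u,v)=\frac{1}{|R(u,v)|}$ if $w$ resolves $u$ and $v$, and $r_w(u,v)=0$ otherwise. For a vertex $w$, $R(w)$ is the set of pairs in $V_p$ resolved by $w$ (nonempty, as it contains all pairs $(w,x)$). The average resolving share of $w$ is $ar_w(G)=\frac{1}{|R(w)|}\sum_{(u,v)\in R(w)} r_w(u,v)$, and the resolving topological index of $G$ is $\mathcal{R}(G)=\sum_{w\in V(G)} ar_w(G)$. *)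

(* Defs.v *)
From mathcomp Require Import all_boot all_order all_algebra.
Set Implicit Arguments. Unset Strict Implicit. Unset Printing Implicit Defensive.
Import Order.TTheory GRing.Theory Num.Theory.
Local Open Scope ring_scope.

Section Resolving.
Variables (T : finType) (e : rel T).
(* e is intended to be a symmetric irreflexive adjacency relation
   of a finite simple connected graph on T. *)

Fixpoint ball (n : nat) (u : T) : {set T} :=
  match n with
  | 0 => [set u]
  | n'.+1 => ball n' u :|: [set y | [exists x in ball n' u, e x y]]
  end.

(* shortest-path distance: least n with v within n steps of u
   (for a connected graph this is < #|T|) *)
Definition gdist (u v : T) : nat :=
  find (fun n => v \in ball n u) (iota 0 #|T|).

Definition Vp : {set {set T}} := [set p : {set T} | #|p| == 2%N].

Definition resolves (x : T) (p : {set T}) : bool :=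
  [exists u in p, exists v in p, gdist x u != gdist x v].

Definition Rpair (p : {set T}) : {set T} := [set w | resolves w p].

Definition rshare (w : T) (p : {set T}) : rat :=
  if resolves w p then (#|Rpair p|%:R)^-1 else 0.

Definition Rvert (w : T) : {set {set T}} := [set p in Vp | resolves w p].

Definition avg_share (w : T) : rat :=
  (#|Rvert w|%:R)^-1 * \sum_(p in Rvert w) rshare w p.

Definition resolving_index : rat := \sum_(w : T) avg_share w.
End Resolving.

Definition petersen_vertex := {A : {set 'I_5} | #|A| == 2%N}.
Definition petersen_adj : rel petersen_vertex :=
  fun A B => [disjoint (val A) & (val B)].

(* Main.v *)
Require Import Defs.
From mathcomp Require Import all_boot all_order all_algebra.

Import GRing.Theory Num.Theory.
Local Open Scope ring_scope.

Section Gen.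
Variables (T : finType) (e : rel T).

Lemma ballSE n x y :
  (y \in ball e n.+1 x) = (y \in ball e n x) || [exists z in ball e n x, e z y].
Proof. by rewrite /= in_setU inE. Qed.

Lemma ball0 x y : (y \in ball e 0 x) = (y == x).
Proof. by rewrite /= in_set1. Qed.

Lemma ball1 x y : (y \in ball e 1 x) = (y == x) || e x y.
Proof.
rewrite ballSE ball0; congr (_ || _).
apply/existsP/idP => [[z /andP[]]|h]; first by rewrite ball0 => /eqP ->.
by exists x; rewrite ball0 eqxx h.
Qed.

Lemma gdist_gen x y : (2 < #|{: T}|)%N -> y \in ball e 2 x ->
  gdist e x y = if y == x then 0%N else if e x y then 1%N else 2%N.
Proof.
move=> hT hb; rewrite /gdist.
case: #|{: T}| hT => [|[|[|m]]] // _.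
have fc (p : pred nat) k s : find p (k :: s) = if p k then 0%N else (find p s).+1 by [].
rewrite (_ : iota 0 m.+3 = 0%N :: 1%N :: 2%N :: iota 3 m) // !fc ball0 ball1 hb; case: (y == x) => //=; case: (e x y) => //=.
Qed.

Lemma in_ball2 x y : (y == x) || e x y -> y \in ball e 2 x.
Proof. by move=> h; rewrite ballSE ball1 h. Qed.

Lemma gdist0 x : (2 < #|{: T}|)%N -> gdist e x x = 0%N.
Proof. by move=> h; rewrite gdist_gen ?eqxx // in_ball2 ?eqxx. Qed.

Lemma gdist1 x y : (2 < #|{: T}|)%N -> x != y -> e x y -> gdist e x y = 1%N.
Proof.
move=> h n a; rewrite gdist_gen //; last by rewrite in_ball2 // a orbT.
by rewrite eq_sym (negbTE n) a.
Qed.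

Lemma gdist2 x y z : (2 < #|{: T}|)%N -> x != y -> ~~ e x y -> e x z -> e z y ->
  gdist e x y = 2%N.
Proof.
move=> h n a h1 h2; rewrite gdist_gen //.
  by rewrite eq_sym (negbTE n) (negbTE a).
rewrite ballSE; apply/orP; right; apply/existsP; exists z.
by rewrite ball1 h1 orbT h2.
Qed.

Lemma resolves2 x u v : resolves e x [set u; v] = (gdist e x u != gdist e x v).
Proof.
apply/existsP/idP => [[u' /andP[hu /existsP[v' /andP[hv hne]]]]|h].
  move: hu hv hne; rewrite !in_set2.
  by case/orP=> /eqP-> /orP[] /eqP->; rewrite ?eqxx // eq_sym.
by exists u; rewrite in_set2 eqxx /=; apply/existsP; exists v;
   rewrite in_set2 eqxx orbT h.
Qed.

Lemma disj2 (a b c d : T) :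
  [disjoint [set a; b] & [set c; d]] = [&& a != c, a != d, b != c & b != d].
Proof.
rewrite -setI_eq0; apply/eqP/and4P => [h | [h1 h2 h3 h4]].
  split; apply/eqP => E.
  - have : a \in set0 by rewrite -h in_setI !in_set2 E !eqxx ?orbT.
    by rewrite in_set0.
  - have : a \in set0 by rewrite -h in_setI !in_set2 E !eqxx ?orbT.
    by rewrite in_set0.
  - have : b \in set0 by rewrite -h in_setI !in_set2 E !eqxx ?orbT.
    by rewrite in_set0.
  - have : b \in set0 by rewrite -h in_setI !in_set2 E !eqxx ?orbT.
    by rewrite in_set0.
apply/setP => x; rewrite in_setI !in_set2 in_set0.
apply/negP => /andP[/orP[]/eqP-> /orP[]/eqP E].
- by rewrite E eqxx in h1.
- by rewrite E eqxx in h2.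
- by rewrite E eqxx in h3.
- by rewrite E eqxx in h4.
Qed.

Lemma seteq2 (a b c d : T) :
  ([set a; b] == [set c; d]) =
  [&& (a \in [set c; d]), (b \in [set c; d]), (c \in [set a; b]) & (d \in [set a; b])].
Proof. by rewrite eqEsubset !subUset !sub1set !andbA. Qed.

End Gen.

Definition M := ('I_5 * 'I_5)%type.
Notation o k := (@Ordinal 5 k erefl).
Definition P : seq M :=
  [:: (o 0, o 1); (o 0, o 2); (o 0, o 3); (o 0, o 4); (o 1, o 2);
      (o 1, o 3); (o 1, o 4); (o 2, o 3); (o 2, o 4); (o 3, o 4)].
Definition O5 : seq 'I_5 := [:: o 0; o 1; o 2; o 3; o 4].

Lemma memO5 (i : 'I_5) : i \in O5.
Proof. by case: i => [[|[|[|[|[|k]]]]] Hi]. Qed.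

Definition in2 (x a b : 'I_5) := (x == a) || (x == b).
Definition madj (a b : M) :=
  [&& a.1 != b.1, a.1 != b.2, a.2 != b.1 & a.2 != b.2].
Definition md (a b : M) : nat := if a == b then 0 else if madj a b then 1 else 2.

Definition v0 : petersen_vertex.
Proof. exists [set (o 0); (o 1)]. by rewrite cards2. Defined.

Definition phi (c : M) : petersen_vertex := insubd v0 [set c.1; c.2].

Notation T := petersen_vertex.

Lemma valphi c : c \in P -> val (phi c) = [set c.1; c.2].
Proof.
move=> hc; rewrite /phi insubdK // unfold_in cards2.
have : all (fun c : M => c.1 != c.2) P by [].
by move/allP/(_ c hc) => ->.
Qed.

Lemma phi_eq a b : a \in P -> b \in P -> (phi a == phi b) = (a == b).
Proof.
move=> ha hb; rewrite -val_eqE valphi // valphi // seteq2 !in_set2.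
have : all (fun a : M => all (fun b : M =>
   [&& in2 a.1 b.1 b.2, in2 a.2 b.1 b.2, in2 b.1 a.1 a.2 & in2 b.2 a.1 a.2]
    == (a == b)) P) P by vm_compute.
by move/allP/(_ a ha)/allP/(_ b hb)/eqP.
Qed.

Lemma adj_phi a b : a \in P -> b \in P -> petersen_adj (phi a) (phi b) = madj a b.
Proof. by move=> ha hb; rewrite /petersen_adj valphi // valphi // disj2. Qed.

Lemma cover (x : T) : exists2 c, c \in P & x = phi c.
Proof.
case: x => A hA; have /cards2P [i [j [ij EA]]] := hA.
have : all (fun i => all (fun j => (i == j) ||
   has (fun c : M => ((c.1 == i) && (c.2 == j)) || ((c.1 == j) && (c.2 == i))) P)
   O5) O5 by vm_compute.
move/allP/(_ i (memO5 i))/allP/(_ j (memO5 j)); rewrite (negbTE ij) orFb.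
case/hasP => c hc h; exists c => //; apply: val_inj; rewrite valphi //= EA.
by case/orP: h => /andP[/eqP <- /eqP <-] //; rewrite setUC.
Qed.

Definition L := map phi P.

Lemma uniqL : uniq L.
Proof.
rewrite map_inj_in_uniq //; move=> a b ha hb h.
by apply/eqP; rewrite -phi_eq // h.
Qed.

Lemma memL x : x \in L.
Proof. by have [c hc ->] := cover x; apply: map_f. Qed.

Lemma cardT10 : #|{: T}| = 10%N.
Proof.
rewrite cardT (perm_size (uniq_perm (enum_uniq _) uniqL _)) ?size_map //.
by move=> x; rewrite mem_enum memL.
Qed.

Lemma hT : (2 < #|{: T}|)%N. Proof. by rewrite cardT10. Qed.

Lemma card_count (Q : pred T) : #|[set w | Q w]| = count (fun c => Q (phi c)) P.
Proof.
have -> : #|[set w | Q w]| = #|Q| by apply: eq_card => w; rewrite inE.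
rewrite cardE (perm_size (uniq_perm (enum_uniq _) (filter_uniq Q uniqL) _)).
  by rewrite size_filter count_map.
by move=> x; rewrite mem_enum mem_filter memL andbT.
Qed.

Lemma gdist_phi a b : a \in P -> b \in P ->
  gdist petersen_adj (phi a) (phi b) = md a b.
Proof.
move=> ha hb; rewrite /md; case: eqP => [->|/eqP ne]; first exact: gdist0 hT.
have ne' : phi a != phi b by rewrite phi_eq.
case: ifP => adj; first by apply: gdist1 hT ne' _; rewrite adj_phi.
have : all (fun a : M => all (fun b : M => (a == b) || madj a b ||
   has (fun c => madj a c && madj c b) P) P) P by vm_compute.
move/allP/(_ a ha)/allP/(_ b hb); rewrite (negbTE ne) adj !orFb.
case/hasP => c hc /andP[h1 h2].
by apply: (@gdist2 _ _ _ _ (phi c) hT ne'); rewrite adj_phi ?adj.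
Qed.

Lemma cardR p : p \in Vp T -> #|Rpair petersen_adj p| = 6%N.
Proof.
rewrite inE => /cards2P [u [v [uv ->]]].
have [a ha Ea] := cover u; have [b hb Eb] := cover v; subst u v.
have ab : a != b by apply: contra uv => /eqP ->.
rewrite /Rpair card_count.
rewrite (eq_in_count (a2 := fun c => md c a != md c b)); last first.
  by move=> c hc /=; rewrite resolves2 !gdist_phi.
have : all (fun a : M => all (fun b : M => (a == b) ||
   (count (fun c => md c a != md c b) P == 6%N)) P) P by vm_compute.
by move/allP/(_ a ha)/allP/(_ b hb); rewrite (negbTE ab) => /eqP.
Qed.

Lemma avg w : avg_share petersen_adj w = 6%:R^-1.
Proof.
rewrite /avg_share (eq_bigr (fun _ => 6%:R^-1)); last first.
  move=> p; rewrite /Rvert inE => /andP[hp hr].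
  by rewrite /rshare hr cardR.
rewrite sumr_const; set n := #|Rvert _ _|.
rewrite -(mulr_natr (6%:R^-1) n) mulrCA mulVf ?mulr1 //.
rewrite pnatr_eq0 -lt0n; apply/card_gt0P.
have [a ha ->] := cover w.
have : all (fun a : M => has (fun b => b != a) P) P by vm_compute.
move/allP/(_ a ha)/hasP => [b hb ba].
have ab : a != b by rewrite eq_sym.
exists [set phi a; phi b]; rewrite /Rvert !inE cards2 phi_eq // ab /=.
by rewrite resolves2 !gdist_phi // /md eqxx (negbTE ab); case: ifP.
Qed.

Theorem theorem3p6 :
  resolving_index petersen_adj = (5%:R / 3%:R : rat).
Proof.
rewrite /resolving_index (eq_bigr (fun _ => 6%:R^-1)) => [|w _]; last exact: avg.
by rewrite sumr_const cardT10; vm_compute.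
Qed.
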